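(* Let $K_1,K_2:\mathbb R\to(0,\infty)$ and $a:\mathbb R^2\to(0,\infty)$ be positive, bounded, smooth, and let $d\ge0$ be a constant. Consider $$\begin{aligned}\dot x_1&=x_1\Big[r_1\Big(1-\frac{x_1}{K_1(u_1)}\Big)-\frac{a(u_1,u_2)x_2}{1+ha(u_1,u_2)x_1}\Big],\\ \dot x_2&=x_2\Big[\frac{ea(u_1,u_2)x_1}{1+ha(u_1,u_2)x_1}-d+r_2\Big(1-\frac{x_2}{K_2(u_2)}\Big)\Big],\\ \dot u_1&=\sigma_1^2\Big[\frac{r_1x_1K_1'(u_1)}{K_1(u_1)^2}-\frac{x_2a_{u_1}(u_1,u_2)}{(1+ha(u_1,u_2)x_1)^2}\Big],\\ \dot u_2&=\sigma_2^2\Big[\frac{ex_1a_{u_2}(u_1,u_2)}{(1+ha(u_1,u_2)x_1)^2}+\frac{r_2x_2K_2'(u_2)}{K_2(u_2)^2}\Big],\end{aligned}$$ with constants $r_1,r_2,h,e,\sigma_1,\sigma_2>0$. (i) The host-only equilibrium $(K_1(u_1^* ),0,u_1^*,u_2^* )$ exists if $K_1'(u_1^* )=a_{u_2}(u_1^*,u_2^* )=0$, and it is locally asymptotically stable if $0<\frac{ea(u_1^*,u_2^* )K_1(u_1^* )}{1+ha(u_1^*,u_2^* )K_1(u_1^* )}<d-r_2$, $K_1''(u_1^* )<0$ and $a_{u_2u_2}(u_1^*,u_2^* )<0$. (ii) If $d<r_2$, the parasite-only equilibrium $\big(0,K_2(u_2^* )(1-\frac{d}{r_2}),u_1^*,u_2^*\big)$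 exists if $K_2'(u_2^* )=a_{u_1}(u_1^*,u_2^* )=0$, and it is locally asymptotically stable if $\frac{r_1}{a(u_1^*,u_2^* )}<K_2(u_2^* )(1-\frac{d}{r_2})$, $a_{u_1u_1}(u_1^*,u_2^* )>0$ and $K_2''(u_2^* )<0$.
   Context: Co-evolutionary host–parasite model with trait-independent parasite death rate $d$; $x_1,x_2$ host and parasite densities, $u_1,u_2$ mean traits, subscripts on $a$ denote partial derivatives. *)

(* Defs.v *)
From Stdlib Require Import Reals.
From Coquelicot Require Import Coquelicot.
From Stdlib Require Import List.
Import ListNotations.
Open Scope R_scope.

Definition pos_bounded1 (f : R -> R) : Prop :=
  (forall x, 0 < f x) /\ exists M, forall x, f x <= M.

Definition pos_bounded2 (f : R -> R -> R) : Prop :=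
  (forall x y, 0 < f x y) /\ exists M, forall x y, f x y <= M.

Definition smooth1 (f : R -> R) : Prop :=
  forall (n : nat) (x : R), ex_derive_n f n x.

Definition pd1 (f : R -> R -> R) : R -> R -> R :=
  fun x y => Derive (fun s => f s y) x.
Definition pd2 (f : R -> R -> R) : R -> R -> R :=
  fun x y => Derive (fun s => f x s) y.

(* iterated partial derivatives: true = w.r.t. first variable, false = second *)
Fixpoint pderivs (l : list bool) (f : R -> R -> R) : R -> R -> R :=
  match l with
  | nil => f
  | cons b l' => if b then pd1 (pderivs l' f) else pd2 (pderivs l' f)
  end.

Definition smooth2 (f : R -> R -> R) : Prop :=
  forall (l : list bool),
    (forall x y, continuity_2d_pt (pderivs l f) x y) /\
    (forall x y, ex_derive (fun s => pderivs l f s y) x /\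
                 ex_derive (fun s => pderivs l f x s) y).

Definition state : Type := (R * R * R * R)%type.
Definition c1 (p : state) : R := fst (fst (fst p)).
Definition c2 (p : state) : R := snd (fst (fst p)).
Definition c3 (p : state) : R := snd (fst p).
Definition c4 (p : state) : R := snd p.
Definition comps : list (state -> R) := [c1; c2; c3; c4].

Definition dist4 (p q : state) : R :=
  Rmax (Rmax (Rabs (c1 p - c1 q)) (Rabs (c2 p - c2 q)))
       (Rmax (Rabs (c3 p - c3 q)) (Rabs (c4 p - c4 q))).

Definition solution_on (V : state -> state) (phi : R -> state) (T : Rbar) : Prop :=
  forall c, List.In c comps ->
    filterlim (fun s => c (phi s)) (at_right 0) (locally (c (phi 0))) /\
    (forall t, 0 < t -> Rbar_lt (Finite t) T ->
       is_derive (fun s => c (phi s)) t (c (V (phi t)))).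

Definition equilibrium (V : state -> state) (p : state) : Prop :=
  V p = (0, 0, 0, 0).

Definition loc_asympt_stable (V : state -> state) (p : state) : Prop :=
  equilibrium V p /\
  (forall eps, 0 < eps -> exists delta, 0 < delta /\
     forall phi T, solution_on V phi T -> dist4 (phi 0) p < delta ->
       forall t, 0 <= t -> Rbar_lt (Finite t) T -> dist4 (phi t) p < eps) /\
  (exists delta, 0 < delta /\
     forall phi, solution_on V phi p_infty -> dist4 (phi 0) p < delta ->
       forall c, List.In c comps -> is_lim (fun t => c (phi t)) p_infty (c p)).

Definition hp_field (K1 K2 : R -> R) (a : R -> R -> R)
  (r1 r2 h e d s1 s2 : R) (p : state) : state :=
  let x1 := c1 p in let x2 := c2 p in let u1 := c3 p in let u2 := c4 p in
  let A := a u1 u2 in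
  ( x1 * (r1 * (1 - x1 / K1 u1) - A * x2 / (1 + h * A * x1)),
    x2 * (e * A * x1 / (1 + h * A * x1) - d + r2 * (1 - x2 / K2 u2)),
    s1 ^ 2 * (r1 * x1 * Derive K1 u1 / (K1 u1) ^ 2
              - x2 * pd1 a u1 u2 / (1 + h * A * x1) ^ 2),
    s2 ^ 2 * (e * x1 * pd2 a u1 u2 / (1 + h * A * x1) ^ 2
              + r2 * x2 * Derive K2 u2 / (K2 u2) ^ 2) ).

(* Main.v *)
Require Import Defs.
From Stdlib Require Import Reals Lra Psatz List.
From Coquelicot Require Import Coquelicot.
Open Scope R_scope.
Notation c1 := Defs.c1.
Notation c2 := Defs.c2.
Notation c3 := Defs.c3.
Notation c4 := Defs.c4.

Definition Q2 (f : R -> R -> R) x y lx ly : Prop :=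
  exists C d, 0 < d /\ forall u v, Rabs (u - x) < d -> Rabs (v - y) < d ->
    Rabs (f u v - f x y - (lx * (u - x) + ly * (v - y))) <=
    C * (Rmax (Rabs (u - x)) (Rabs (v - y))) ^ 2.

Definition Q4 (f : state -> R) (p : state) g1 g2 g3 g4 : Prop :=
  exists C d, 0 < d /\ forall q, dist4 q p < d ->
    Rabs (f q - f p - (g1 * (c1 q - c1 p) + g2 * (c2 q - c2 p)
                      + g3 * (c3 q - c3 p) + g4 * (c4 q - c4 p))) <=
    C * (dist4 q p) ^ 2.

Lemma dd1 q p : Rabs (c1 q - c1 p) <= dist4 q p.
Proof. unfold dist4. eapply Rle_trans; [|apply Rmax_l]. apply Rmax_l. Qed.
Lemma dd2 q p : Rabs (c2 q - c2 p) <= dist4 q p.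
Proof. unfold dist4. eapply Rle_trans; [|apply Rmax_l]. apply Rmax_r. Qed.
Lemma dd3 q p : Rabs (c3 q - c3 p) <= dist4 q p.
Proof. unfold dist4. eapply Rle_trans; [|apply Rmax_r]. apply Rmax_l. Qed.
Lemma dd4 q p : Rabs (c4 q - c4 p) <= dist4 q p.
Proof. unfold dist4. eapply Rle_trans; [|apply Rmax_r]. apply Rmax_r. Qed.
Lemma dd0 q p : 0 <= dist4 q p.
Proof. eapply Rle_trans; [apply Rabs_pos|apply (dd1 q p)]. Qed.

Lemma lin_bound q p g1 g2 g3 g4 :
  Rabs (g1 * (c1 q - c1 p) + g2 * (c2 q - c2 p) + g3 * (c3 q - c3 p) + g4 * (c4 q - c4 p))
  <= (Rabs g1 + Rabs g2 + Rabs g3 + Rabs g4) * dist4 q p.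
Proof.
  pose proof (dd1 q p); pose proof (dd2 q p); pose proof (dd3 q p); pose proof (dd4 q p).
  pose proof (Rabs_triang (g1 * (c1 q - c1 p) + g2 * (c2 q - c2 p) + g3 * (c3 q - c3 p)) (g4 * (c4 q - c4 p))).
  pose proof (Rabs_triang (g1 * (c1 q - c1 p) + g2 * (c2 q - c2 p)) (g3 * (c3 q - c3 p))).
  pose proof (Rabs_triang (g1 * (c1 q - c1 p)) (g2 * (c2 q - c2 p))).
  rewrite !Rabs_mult in *.
  pose proof (Rmult_le_compat_l _ _ _ (Rabs_pos g1) (dd1 q p)).
  pose proof (Rmult_le_compat_l _ _ _ (Rabs_pos g2) (dd2 q p)).
  pose proof (Rmult_le_compat_l _ _ _ (Rabs_pos g3) (dd3 q p)).
  pose proof (Rmult_le_compat_l _ _ _ (Rabs_pos g4) (dd4 q p)).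
  lra.
Qed.

Lemma Q4_lip f p g1 g2 g3 g4 : Q4 f p g1 g2 g3 g4 ->
  exists L d, 0 < d /\ 0 <= L /\ forall q, dist4 q p < d -> Rabs (f q - f p) <= L * dist4 q p.
Proof.
  intros (C & d & Hd & H).
  exists (Rabs g1 + Rabs g2 + Rabs g3 + Rabs g4 + Rabs C), (Rmin d 1). split; [apply Rmin_pos; lra|].
  split. { pose proof (Rabs_pos g1); pose proof (Rabs_pos g2); pose proof (Rabs_pos g3); pose proof (Rabs_pos g4); pose proof (Rabs_pos C). lra. }
  intros q Hq. assert (Hq1 : dist4 q p < d) by (eapply Rlt_le_trans; [apply Hq|apply Rmin_l]).
  assert (Hq2 : dist4 q p < 1) by (eapply Rlt_le_trans; [apply Hq|apply Rmin_r]).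
  specialize (H q Hq1). pose proof (lin_bound q p g1 g2 g3 g4). pose proof (dd0 q p).
  set (lin := g1 * (c1 q - c1 p) + g2 * (c2 q - c2 p) + g3 * (c3 q - c3 p) + g4 * (c4 q - c4 p)) in *.
  replace (f q - f p) with ((f q - f p - lin) + lin) by ring.
  eapply Rle_trans; [apply Rabs_triang|].
  assert (C * dist4 q p ^ 2 <= Rabs C * dist4 q p).
  { apply Rle_trans with (Rabs C * dist4 q p ^ 2).
    - apply Rmult_le_compat_r; [apply pow2_ge_0|apply Rle_abs].
    - apply Rmult_le_compat_l; [apply Rabs_pos|]. simpl. nra. }
  lra.
Qed.

Lemma Q4_comp a f g p la lb gf1 gf2 gf3 gf4 gg1 gg2 gg3 gg4 :
  Q2 a (f p) (g p) la lb -> Q4 f p gf1 gf2 gf3 gf4 -> Q4 g p gg1 gg2 gg3 gg4 ->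
  Q4 (fun q => a (f q) (g q)) p (la * gf1 + lb * gg1) (la * gf2 + lb * gg2)
     (la * gf3 + lb * gg3) (la * gf4 + lb * gg4).
Proof.
  intros (Ca & da & Hda & Ha) Hf Hg.
  destruct (Q4_lip _ _ _ _ _ _ Hf) as (Lf & df' & Hdf' & HLf & Hlf).
  destruct (Q4_lip _ _ _ _ _ _ Hg) as (Lg & dg' & Hdg' & HLg & Hlg).
  destruct Hf as (Cf & df & Hdf & Hf). destruct Hg as (Cg & dg & Hdg & Hg).
  exists (Rabs Ca * (Lf + Lg) ^ 2 + Rabs la * Rabs Cf + Rabs lb * Rabs Cg).
  set (d := Rmin (Rmin (Rmin df dg) (Rmin df' dg')) (da / (Lf + Lg + 1))).
  assert (Hd : 0 < d). { unfold d. repeat apply Rmin_pos; try lra. apply Rdiv_lt_0_compat; lra. }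
  exists d. split; [exact Hd|]. intros q Hq.
  assert (Hq0 : dist4 q p < Rmin (Rmin df dg) (Rmin df' dg')) by (eapply Rlt_le_trans; [apply Hq|apply Rmin_l]).
  assert (Hq5 : dist4 q p < da / (Lf + Lg + 1)) by (eapply Rlt_le_trans; [apply Hq|apply Rmin_r]).
  assert (Hq1 : dist4 q p < df) by (eapply Rlt_le_trans; [apply Hq0|]; eapply Rle_trans; apply Rmin_l).
  assert (Hq2 : dist4 q p < dg) by (eapply Rlt_le_trans; [apply Hq0|]; eapply Rle_trans; [apply Rmin_l|apply Rmin_r]).
  assert (Hq3 : dist4 q p < df') by (eapply Rlt_le_trans; [apply Hq0|]; eapply Rle_trans; [apply Rmin_r|apply Rmin_l]).
  assert (Hq4 : dist4 q p < dg') by (eapply Rlt_le_trans; [apply Hq0|]; eapply Rle_trans; [apply Rmin_r|apply Rmin_r]).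
  pose proof (dd0 q p) as D0.
  specialize (Hf q Hq1). specialize (Hg q Hq2). specialize (Hlf q Hq3). specialize (Hlg q Hq4).
  assert (Hda' : (Lf + Lg + 1) * dist4 q p < da).
  { apply (Rmult_lt_compat_l (Lf + Lg + 1)) in Hq5; [|lra].
    replace ((Lf + Lg + 1) * (da / (Lf + Lg + 1))) with da in Hq5 by (field; lra). exact Hq5. }
  assert (Hu : Rabs (f q - f p) < da) by nra.
  assert (Hv : Rabs (g q - g p) < da) by nra.
  specialize (Ha _ _ Hu Hv).
  assert (Hm : Rmax (Rabs (f q - f p)) (Rabs (g q - g p)) <= (Lf + Lg) * dist4 q p).
  { apply Rmax_lub; nra. }
  assert (Hm2 : Rmax (Rabs (f q - f p)) (Rabs (g q - g p)) ^ 2 <= ((Lf + Lg) * dist4 q p) ^2).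
  { apply pow_incr. split; [|exact Hm]. eapply Rle_trans; [apply Rabs_pos|apply Rmax_l]. }
  set (lf := gf1 * (c1 q - c1 p) + gf2 * (c2 q - c2 p) + gf3 * (c3 q - c3 p) + gf4 * (c4 q - c4 p)) in *.
  set (lg := gg1 * (c1 q - c1 p) + gg2 * (c2 q - c2 p) + gg3 * (c3 q - c3 p) + gg4 * (c4 q - c4 p)) in *.
  replace ((la * gf1 + lb * gg1) * (c1 q - c1 p) + (la * gf2 + lb * gg2) * (c2 q - c2 p) +
     (la * gf3 + lb * gg3) * (c3 q - c3 p) + (la * gf4 + lb * gg4) * (c4 q - c4 p))
    with (la * lf + lb * lg) by (unfold lf, lg; ring).
  replace (a (f q) (g q) - a (f p) (g p) - (la * lf + lb * lg)) with
    ((a (f q) (g q) - a (f p) (g p) - (la * (f q - f p) + lb * (g q - g p)))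
     + la * (f q - f p - lf) + lb * (g q - g p - lg)) by ring.
  eapply Rle_trans; [apply Rabs_triang|].
  eapply Rle_trans; [apply Rplus_le_compat_r; apply Rabs_triang|].
  rewrite !Rabs_mult.
  assert (Ca * Rmax (Rabs (f q - f p)) (Rabs (g q - g p)) ^ 2 <= Rabs Ca * ((Lf + Lg) * dist4 q p) ^ 2).
  { apply Rle_trans with (Rabs Ca * Rmax (Rabs (f q - f p)) (Rabs (g q - g p)) ^ 2).
    - apply Rmult_le_compat_r; [apply pow2_ge_0|apply Rle_abs].
    - apply Rmult_le_compat_l; [apply Rabs_pos|exact Hm2]. }
  assert (Rabs la * Rabs (f q - f p - lf) <= Rabs la * (Rabs Cf * dist4 q p ^ 2)).
  { apply Rmult_le_compat_l; [apply Rabs_pos|]. eapply Rle_trans; [apply Hf|].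
    apply Rmult_le_compat_r; [apply pow2_ge_0|apply Rle_abs]. }
  assert (Rabs lb * Rabs (g q - g p - lg) <= Rabs lb * (Rabs Cg * dist4 q p ^ 2)).
  { apply Rmult_le_compat_l; [apply Rabs_pos|]. eapply Rle_trans; [apply Hg|].
    apply Rmult_le_compat_r; [apply pow2_ge_0|apply Rle_abs]. }
  assert (E : (Rabs Ca * (Lf + Lg) ^ 2 + Rabs la * Rabs Cf + Rabs lb * Rabs Cg) * dist4 q p ^ 2
    = Rabs Ca * ((Lf + Lg) * dist4 q p) ^ 2 + Rabs la * (Rabs Cf * dist4 q p ^ 2) + Rabs lb * (Rabs Cg * dist4 q p ^ 2)) by ring.
  rewrite E. lra.
Qed.

Lemma Q4_ext f f' p g1 g2 g3 g4 : (forall q, f q = f' q) -> Q4 f p g1 g2 g3 g4 -> Q4 f' p g1 g2 g3 g4.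
Proof. intros E (C & d & Hd & H). exists C, d. split; auto. intros q Hq. rewrite <- !E. auto. Qed.

Lemma Q4_grad f p a1 a2 a3 a4 b1 b2 b3 b4 : Q4 f p a1 a2 a3 a4 ->
  a1 = b1 -> a2 = b2 -> a3 = b3 -> a4 = b4 -> Q4 f p b1 b2 b3 b4.
Proof. intros H -> -> -> ->. exact H. Qed.

Lemma Q4_const k p : Q4 (fun _ => k) p 0 0 0 0.
Proof. exists 0, 1. split; [lra|]. intros q _. replace (k - k - _) with 0 by ring. rewrite Rabs_R0. lra. Qed.

Ltac q4base := exists 0, 1; split; [lra|]; intros q _;
  match goal with |- Rabs ?e <= _ => replace e with 0 by ring end; rewrite Rabs_R0; lra.
Lemma Q4_c1 p : Q4 (fun q => c1 q) p 1 0 0 0. Proof. q4base. Qed.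
Lemma Q4_c2 p : Q4 (fun q => c2 q) p 0 1 0 0. Proof. q4base. Qed.
Lemma Q4_c3 p : Q4 (fun q => c3 q) p 0 0 1 0. Proof. q4base. Qed.
Lemma Q4_c4 p : Q4 (fun q => c4 q) p 0 0 0 1. Proof. q4base. Qed.

Lemma Rmax_sq_ge u v : Rabs u * Rabs v <= Rmax (Rabs u) (Rabs v) ^ 2.
Proof.
  pose proof (Rabs_pos u); pose proof (Rabs_pos v).
  pose proof (Rmax_l (Rabs u) (Rabs v)); pose proof (Rmax_r (Rabs u) (Rabs v)). simpl. nra.
Qed.

Lemma Q2_plus x y : Q2 (fun u v => u + v) x y 1 1.
Proof. exists 0, 1. split; [lra|]. intros u v _ _. replace (_ - _ - _) with 0 by ring. rewrite Rabs_R0. simpl; lra. Qed.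
Lemma Q2_minus x y : Q2 (fun u v => u - v) x y 1 (-1).
Proof. exists 0, 1. split; [lra|]. intros u v _ _. replace (_ - _ - _) with 0 by ring. rewrite Rabs_R0. simpl; lra. Qed.
Lemma Q2_mult x y : Q2 (fun u v => u * v) x y y x.
Proof. exists 1, 1. split; [lra|]. intros u v _ _.
  replace (_ - _ - _) with ((u - x) * (v - y)) by ring. rewrite Rabs_mult, Rmult_1_l. apply Rmax_sq_ge. Qed.
Lemma Q2_inv x y : x <> 0 -> Q2 (fun u v => / u) x y (- / x ^ 2) 0.
Proof.
  intros Hx. assert (Ha : 0 < Rabs x) by (apply Rabs_pos_lt; auto).
  exists (2 / Rabs x ^ 3), (Rabs x / 2). split; [lra|]. intros u v Hu _.
  assert (Hu0 : Rabs x / 2 <= Rabs u).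
  { pose proof (Rabs_triang_inv x (x - u)). replace (x - (x - u)) with u in H by ring.
    rewrite Rabs_minus_sym in Hu. lra. }
  assert (Hun : u <> 0). { intro; subst. rewrite Rabs_R0 in Hu0. lra. }
  replace (/ u - / x - (- / x ^ 2 * (u - x) + 0 * (v - y))) with ((u - x) ^ 2 / (u * x ^ 2)) by (field; auto).
  unfold Rdiv. rewrite Rabs_mult, Rabs_inv, Rabs_mult, <- !RPow_abs.
  assert (Hm : Rabs (u - x) ^ 2 <= Rmax (Rabs (u - x)) (Rabs (v - y)) ^ 2).
  { apply pow_incr. split; [apply Rabs_pos|apply Rmax_l]. }
  assert (Hi : / (Rabs u * Rabs x ^ 2) <= 2 * / Rabs x ^ 3).
  { replace (2 * / Rabs x ^ 3) with (/ (Rabs x ^ 3 / 2)) by (field; lra). apply Rinv_le_contravar.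
    - apply Rdiv_lt_0_compat; [apply pow_lt|]; lra.
    - simpl. assert (0 <= Rabs x * Rabs x) by nra. nra. }
  rewrite RPow_abs.
  apply Rle_trans with (Rabs ((u - x) ^ 2) * (2 * / Rabs x ^ 3)).
  - apply Rmult_le_compat_l; [apply Rabs_pos|exact Hi].
  - rewrite <- RPow_abs. rewrite (Rmult_comm (Rabs (u - x) ^ 2)). apply Rmult_le_compat_l; [|exact Hm].
    apply Rmult_le_pos; [lra|]. apply Rlt_le, Rinv_0_lt_compat, pow_lt; lra.
Qed.

Lemma Q2_DL f x y : (forall n u v, ex_diff_n f n u v) ->
  Q2 f x y (Derive (fun s => f s y) x) (Derive (fun s => f x s) y).
Proof.
  intros Hf. destruct (Taylor_Lagrange_2d f 1 x y) as [D [del Hdel]].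
  { exists (mkposreal 1 Rlt_0_1). intros; apply Hf. }
  exists D, del. split; [apply cond_pos|]. intros u v Hu Hv. specialize (Hdel u v Hu Hv).
  unfold DL_pol, differential in Hdel. simpl in Hdel. unfold partial_derive, Binomial.C in Hdel. simpl in Hdel. simpl.
  match goal with H : Rabs ?a <= _ |- Rabs ?b <= _ => replace b with a by (field; auto) end.
  exact Hdel.
Qed.

Lemma ex_diff_const n c u v : ex_diff_n (fun _ _ => c) n u v.
Proof.
  revert c u v. induction n; intros c u v; simpl.
  - split; [apply continuity_2d_pt_const|exact I].
  - split; [apply continuity_2d_pt_const|].
    split; [apply ex_derive_const|]. split; [apply ex_derive_const|].
    split; (eapply ex_diff_n_ext_loc; [|apply (IHn 0 u v)]);
      exists (mkposreal 1 Rlt_0_1); intros; simpl; rewrite Derive_const; reflexivity.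
Qed.

Lemma smooth2_diff a : smooth2 a -> forall n l u v, ex_diff_n (pderivs l a) n u v.
Proof.
  intros Ha n. induction n; intros l u v; destruct (Ha l) as [Hc Hd].
  - split; [exact (Hc u v)|exact I].
  - split; [exact (Hc u v)|]. split; [exact (proj1 (Hd u v))|]. split; [exact (proj2 (Hd u v))|].
    split; [exact (IHn (true :: l) u v)|exact (IHn (false :: l) u v)].
Qed.

Lemma smooth1_diff K : smooth1 K -> forall n k u v, ex_diff_n (fun u v => Derive_n K k u) n u v.
Proof.
  intros HK n. induction n; intros k u v.
  - split; [|exact I]. apply continuity_1d_2d_pt_comp with (g := fun u v => u); [|apply continuity_2d_pt_id1].
    exact (proj2 (continuity_pt_filterlim _ _) (ex_derive_continuous (Derive_n K k) u (HK (S k) u))).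
  - split.
    { apply continuity_1d_2d_pt_comp with (g := fun u v => u); [|apply continuity_2d_pt_id1].
      exact (proj2 (continuity_pt_filterlim _ _) (ex_derive_continuous (Derive_n K k) u (HK (S k) u))). }
    split; [exact (HK (S k) u)|]. split; [apply ex_derive_const|].
    split; [exact (IHn (S k) u v)|].
    eapply ex_diff_n_ext_loc; [|apply (ex_diff_const n 0 u v)].
    exists (mkposreal 1 Rlt_0_1); intros; simpl; rewrite Derive_const; reflexivity.
Qed.

Lemma Q2_A a l x y : smooth2 a ->
  Q2 (pderivs l a) x y (pderivs (true :: l) a x y) (pderivs (false :: l) a x y).
Proof. intros Ha. apply Q2_DL. intros; apply smooth2_diff; auto. Qed.

Lemma Q2_K K k x y : smooth1 K -> Q2 (fun u v => Derive_n K k u) x y (Derive_n K (S k) x) 0.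
Proof.
  intros HK. pose proof (Q2_DL (fun u v => Derive_n K k u) x y) as H.
  cbv beta in H. rewrite Derive_const in H. apply H. intros; apply smooth1_diff; auto.
Qed.

Section Q4L.
Variables (f g : state -> R) (p : state) (gf1 gf2 gf3 gf4 gg1 gg2 gg3 gg4 : R).
Hypothesis Hf : Q4 f p gf1 gf2 gf3 gf4.
Hypothesis Hg : Q4 g p gg1 gg2 gg3 gg4.

Lemma Q4_plus : Q4 (fun q => f q + g q) p (1 * gf1 + 1 * gg1) (1 * gf2 + 1 * gg2) (1 * gf3 + 1 * gg3) (1 * gf4 + 1 * gg4).
Proof. apply (Q4_comp (fun u v => u + v)); auto. apply Q2_plus. Qed.
Lemma Q4_minus : Q4 (fun q => f q - g q) p (1 * gf1 + -1 * gg1) (1 * gf2 + -1 * gg2) (1 * gf3 + -1 * gg3) (1 * gf4 + -1 * gg4).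
Proof. apply (Q4_comp (fun u v => u - v)); auto. apply Q2_minus. Qed.
Lemma Q4_mult : Q4 (fun q => f q * g q) p (g p * gf1 + f p * gg1) (g p * gf2 + f p * gg2) (g p * gf3 + f p * gg3) (g p * gf4 + f p * gg4).
Proof. apply (Q4_comp (fun u v => u * v)); auto. apply Q2_mult. Qed.
Lemma Q4_inv : g p <> 0 -> Q4 (fun q => / g q) p (- / g p ^ 2 * gg1 + 0 * gg1) (- / g p ^ 2 * gg2 + 0 * gg2) (- / g p ^ 2 * gg3 + 0 * gg3) (- / g p ^ 2 * gg4 + 0 * gg4).
Proof. intros H. apply (Q4_comp (fun u v => / u) g g); auto. apply Q2_inv; auto. Qed.
Lemma Q4_div : g p <> 0 -> Q4 (fun q => f q / g q) p
  (/ g p * gf1 + f p * (- / g p ^ 2 * gg1 + 0 * gg1)) (/ g p * gf2 + f p * (- / g p ^ 2 * gg2 + 0 * gg2))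
  (/ g p * gf3 + f p * (- / g p ^ 2 * gg3 + 0 * gg3)) (/ g p * gf4 + f p * (- / g p ^ 2 * gg4 + 0 * gg4)).
Proof. intros H. unfold Rdiv. apply (Q4_comp (fun u v => u * v) f (fun q => / g q)); [apply Q2_mult|auto|apply Q4_inv; auto]. Qed.
Lemma Q4_pow2 : Q4 (fun q => f q ^ 2) p (f p * gf1 + f p * gf1) (f p * gf2 + f p * gf2) (f p * gf3 + f p * gf3) (f p * gf4 + f p * gf4).
Proof. eapply Q4_ext; [|apply (Q4_comp (fun u v => u * v) f f); auto; apply Q2_mult]. intros; simpl; ring. Qed.
Lemma Q4_K K : smooth1 K -> Q4 (fun q => K (f q)) p (Derive_n K 1 (f p) * gf1 + 0 * gf1) (Derive_n K 1 (f p) * gf2 + 0 * gf2) (Derive_n K 1 (f p) * gf3 + 0 * gf3) (Derive_n K 1 (f p) * gf4 + 0 * gf4).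
Proof. intros HK. apply (Q4_comp (fun u v => Derive_n K 0 u) f f); auto. apply Q2_K; auto. Qed.
Lemma Q4_DK K : smooth1 K -> Q4 (fun q => Derive K (f q)) p (Derive_n K 2 (f p) * gf1 + 0 * gf1) (Derive_n K 2 (f p) * gf2 + 0 * gf2) (Derive_n K 2 (f p) * gf3 + 0 * gf3) (Derive_n K 2 (f p) * gf4 + 0 * gf4).
Proof. intros HK. apply (Q4_comp (fun u v => Derive_n K 1 u) f f); auto. apply Q2_K; auto. Qed.
Lemma Q4_A a l : smooth2 a -> Q4 (fun q => pderivs l a (f q) (g q)) p
  (pderivs (true :: l) a (f p) (g p) * gf1 + pderivs (false :: l) a (f p) (g p) * gg1)
  (pderivs (true :: l) a (f p) (g p) * gf2 + pderivs (false :: l) a (f p) (g p) * gg2)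
  (pderivs (true :: l) a (f p) (g p) * gf3 + pderivs (false :: l) a (f p) (g p) * gg3)
  (pderivs (true :: l) a (f p) (g p) * gf4 + pderivs (false :: l) a (f p) (g p) * gg4).
Proof. intros Ha. apply (Q4_comp (pderivs l a)); auto. apply Q2_A; auto. Qed.
End Q4L.


Lemma cross wi wj L B m zi zj : 0 <= wi -> Rabs L <= B -> 0 < m -> wi * (32 * B ^ 2) <= wj * m ^ 2 ->
  wi * L * zi * zj <= wi * (m / 8) * zi ^ 2 + wj * (m / 16) * zj ^ 2.
Proof.
  intros Hwi HL Hm Hw.
  assert (H1 : L * (zi * zj) <= B * (Rabs zi * Rabs zj)).
  { eapply Rle_trans; [apply Rle_abs|]. rewrite !Rabs_mult.
    apply Rmult_le_compat_r; [apply Rmult_le_pos; apply Rabs_pos|exact HL]. }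
  assert (H2 : B * (Rabs zi * Rabs zj) <= (m / 8) * zi ^ 2 + (2 * B ^ 2 / m) * zj ^ 2).
  { assert (E : 0 <= 2 * (m * Rabs zi / 4 - B * Rabs zj) ^ 2) by (apply Rmult_le_pos; [lra|apply pow2_ge_0]).
    rewrite <- (pow2_abs zi), <- (pow2_abs zj).
    apply (Rmult_le_reg_l m); [lra|].
    replace (m * (m / 8 * Rabs zi ^ 2 + 2 * B ^ 2 / m * Rabs zj ^ 2)) with (m^2 / 8 * Rabs zi ^ 2 + 2 * B ^ 2 * Rabs zj ^ 2) by (field; lra).
    nra. }
  assert (H3 : wi * (2 * B ^ 2 / m) * zj ^ 2 <= wj * (m / 16) * zj ^ 2).
  { apply Rmult_le_compat_r; [apply pow2_ge_0|].
    apply (Rmult_le_reg_l (16 * m)); [lra|].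
    replace (16 * m * (wi * (2 * B ^ 2 / m))) with (wi * (32 * B ^ 2)) by (field; lra).
    replace (16 * m * (wj * (m / 16))) with (wj * m ^ 2) by (field; lra). exact Hw. }
  assert (H4 : wi * (L * (zi * zj)) <= wi * ((m / 8) * zi ^ 2 + (2 * B ^ 2 / m) * zj ^ 2)).
  { apply Rmult_le_compat_l; [exact Hwi|lra]. }
  nra.
Qed.

Lemma tri L11 L21 L22 L31 L32 L33 L41 L42 L43 L44 :
  L11 < 0 -> L22 < 0 -> L33 < 0 -> L44 < 0 ->
  exists w1 w2 w3 w4 c, 0 < w1 /\ 0 < w2 /\ 0 < w3 /\ 0 < w4 /\ 0 < c /\
  forall z1 z2 z3 z4,
    w1 * z1 * (L11 * z1) + w2 * z2 * (L21 * z1 + L22 * z2) + w3 * z3 * (L31 * z1 + L32 * z2 + L33 * z3)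
    + w4 * z4 * (L41 * z1 + L42 * z2 + L43 * z3 + L44 * z4)
    <= - c * (w1 * z1 ^ 2 + w2 * z2 ^ 2 + w3 * z3 ^ 2 + w4 * z4 ^ 2).
Proof.
  intros H1 H2 H3 H4.
  set (m := Rmin (Rmin (- L11) (- L22)) (Rmin (- L33) (- L44))).
  assert (Hm : 0 < m) by (unfold m; repeat apply Rmin_pos; lra).
  assert (Hm1 : L11 <= - m) by (unfold m; pose proof (Rmin_l (Rmin (- L11) (- L22)) (Rmin (- L33) (- L44))); pose proof (Rmin_l (- L11) (- L22)); lra).
  assert (Hm2 : L22 <= - m) by (unfold m; pose proof (Rmin_l (Rmin (- L11) (- L22)) (Rmin (- L33) (- L44))); pose proof (Rmin_r (- L11) (- L22)); lra).
  assert (Hm3 : L33 <= - m) by (unfold m; pose proof (Rmin_r (Rmin (- L11) (- L22)) (Rmin (- L33) (- L44))); pose proof (Rmin_l (- L33) (- L44)); lra).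
  assert (Hm4 : L44 <= - m) by (unfold m; pose proof (Rmin_r (Rmin (- L11) (- L22)) (Rmin (- L33) (- L44))); pose proof (Rmin_r (- L33) (- L44)); lra).
  set (B := 1 + Rabs L21 + Rabs L31 + Rabs L32 + Rabs L41 + Rabs L42 + Rabs L43).
  pose proof (Rabs_pos L21); pose proof (Rabs_pos L31); pose proof (Rabs_pos L32);
  pose proof (Rabs_pos L41); pose proof (Rabs_pos L42); pose proof (Rabs_pos L43).
  assert (HB : 1 <= B) by (unfold B; lra).
  set (r := m ^ 2 / (32 * B ^ 2 + m ^ 2)).
  assert (Hden : 0 < 32 * B ^ 2 + m ^ 2) by nra.
  assert (Hr : 0 < r) by (unfold r; apply Rdiv_lt_0_compat; nra).
  assert (Hr1 : r < 1) by (unfold r; apply (Rmult_lt_reg_r (32 * B ^ 2 + m ^ 2)); [lra|]; field_simplify; nra).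
  assert (Hrb : r * (32 * B ^ 2) <= m ^ 2).
  { unfold r. apply (Rmult_le_reg_r (32 * B ^ 2 + m ^ 2)); [lra|]. field_simplify; nra. }
  exists 1, r, (r * r), (r * r * r), (m / 4).
  split; [lra|]. split; [lra|]. split; [nra|]. split; [apply Rmult_lt_0_compat; nra|]. split; [lra|].
  intros z1 z2 z3 z4.
  assert (HwB : forall wi wj, 0 <= wj -> wi <= r * wj -> wi * (32 * B ^ 2) <= wj * m ^ 2).
  { intros wi wj Hwj Hij. apply Rle_trans with (r * wj * (32 * B ^ 2)).
    - apply Rmult_le_compat_r; [nra|exact Hij].
    - replace (r * wj * (32 * B ^ 2)) with (wj * (r * (32 * B ^ 2))) by ring. apply Rmult_le_compat_l; lra. }
  assert (LB21 : Rabs L21 <= B) by (unfold B; lra).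
  assert (LB31 : Rabs L31 <= B) by (unfold B; lra).
  assert (LB32 : Rabs L32 <= B) by (unfold B; lra).
  assert (LB41 : Rabs L41 <= B) by (unfold B; lra).
  assert (LB42 : Rabs L42 <= B) by (unfold B; lra).
  assert (LB43 : Rabs L43 <= B) by (unfold B; lra).
  assert (Hrr : 0 < r * r) by nra.
  assert (Hrrr : 0 < r * r * r) by nra.
  pose proof (cross r 1 L21 B m z2 z1 ltac:(lra) LB21 Hm (HwB r 1 ltac:(lra) ltac:(lra))) as C21.
  pose proof (cross (r*r) 1 L31 B m z3 z1 ltac:(lra) LB31 Hm (HwB (r*r) 1 ltac:(lra) ltac:(nra))) as C31.
  pose proof (cross (r*r) r L32 B m z3 z2 ltac:(lra) LB32 Hm (HwB (r*r) r ltac:(lra) ltac:(nra))) as C32.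
  pose proof (cross (r*r*r) 1 L41 B m z4 z1 ltac:(lra) LB41 Hm (HwB (r*r*r) 1 ltac:(lra) ltac:(nra))) as C41.
  pose proof (cross (r*r*r) r L42 B m z4 z2 ltac:(lra) LB42 Hm (HwB (r*r*r) r ltac:(lra) ltac:(nra))) as C42.
  pose proof (cross (r*r*r) (r*r) L43 B m z4 z3 ltac:(lra) LB43 Hm (HwB (r*r*r) (r*r) ltac:(lra) ltac:(nra))) as C43.
  assert (D1 : 1 * z1 * (L11 * z1) <= - m * (1 * z1 ^ 2)) by nra.
  assert (D2 : r * z2 * (L22 * z2) <= - m * (r * z2 ^ 2)).
  { replace (r * z2 * (L22 * z2)) with (L22 * (r * z2 ^ 2)) by ring. apply Rmult_le_compat_r; [|lra]. nra. }
  assert (D3 : r * r * z3 * (L33 * z3) <= - m * (r * r * z3 ^ 2)).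
  { replace (r * r * z3 * (L33 * z3)) with (L33 * (r * r * z3 ^ 2)) by ring. apply Rmult_le_compat_r; [|lra]. nra. }
  assert (D4 : r * r * r * z4 * (L44 * z4) <= - m * (r * r * r * z4 ^ 2)).
  { replace (r * r * r * z4 * (L44 * z4)) with (L44 * (r * r * r * z4 ^ 2)) by ring. apply Rmult_le_compat_r; [|lra].
    apply Rmult_le_pos; [lra|apply pow2_ge_0]. }
  assert (P1 : 0 <= m * (1 * z1 ^ 2)) by (apply Rmult_le_pos; [lra|]; nra).
  assert (P2 : 0 <= m * (r * z2 ^ 2)) by (apply Rmult_le_pos; [lra|]; apply Rmult_le_pos; [lra|apply pow2_ge_0]).
  assert (P3 : 0 <= m * (r * r * z3 ^ 2)) by (apply Rmult_le_pos; [lra|]; apply Rmult_le_pos; [lra|apply pow2_ge_0]).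
  assert (P4 : 0 <= m * (r * r * r * z4 ^ 2)) by (apply Rmult_le_pos; [lra|]; apply Rmult_le_pos; [lra|apply pow2_ge_0]).
  nra.
Qed.


Definition RC (h : R -> R) (t : R) := filterlim h (at_right t) (locally (h t)).

Lemma RC_eps h t : RC h t -> forall eps, 0 < eps -> exists del, 0 < del /\
  forall s, t < s < t + del -> Rabs (h s - h t) < eps.
Proof.
  intros H eps Heps. destruct (H _ (locally_ball (h t) (mkposreal eps Heps))) as [del Hdel].
  exists del. split; [apply cond_pos|]. intros s [Hs1 Hs2].
  assert (B : ball t del s).
  { unfold ball; simpl; unfold AbsRing_ball, abs, minus, plus, opp; simpl.
    rewrite Rabs_right; lra. }
  specialize (Hdel s B Hs1). unfold ball in Hdel; simpl in Hdel;
  unfold AbsRing_ball, abs, minus, plus, opp in Hdel; simpl in Hdel. exact Hdel.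
Qed.

Lemma RC_of_cont h t : continuous h t -> RC h t.
Proof.
  intros H P HP. apply H in HP. destruct HP as [del Hdel]. exists del. intros y Hy _. apply Hdel, Hy.
Qed.

Lemma RC_plus f g t : RC f t -> RC g t -> RC (fun s => f s + g s) t.
Proof. intros Hf Hg. eapply filterlim_comp_2; [exact Hf|exact Hg|]. exact (filterlim_plus (K:=R_AbsRing) (V:=R_NormedModule) (f t) (g t)). Qed.
Lemma RC_mult f g t : RC f t -> RC g t -> RC (fun s => f s * g s) t.
Proof. intros Hf Hg. eapply filterlim_comp_2; [exact Hf|exact Hg|]. exact (filterlim_mult (K:=R_AbsRing) (f t) (g t)). Qed.
Lemma RC_const k t : RC (fun _ => k) t.
Proof. apply filterlim_const. Qed.
Lemma RC_minus f g t : RC f t -> RC g t -> RC (fun s => f s - g s) t.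
Proof. intros Hf Hg. apply (RC_plus f (fun s => - g s)); auto.
  eapply (filterlim_comp _ _ _ g Ropp); [exact Hg|]. exact (filterlim_opp (K:=R_AbsRing) (V:=R_NormedModule) (g t)). Qed.

Lemma mono (h dh : R -> R) (b : R) (T : Rbar) :
  0 <= b -> Rbar_lt b T -> (forall t, 0 < t -> Rbar_lt t T -> is_derive h t (dh t)) ->
  (forall t, 0 < t < b -> dh t <= 0) -> RC h 0 -> h b <= h 0.
Proof.
  intros Hb HbT Hd Hneg Hrc.
  destruct (Req_dec b 0) as [->|Hb0]; [lra|].
  apply Rnot_lt_le. intros Hlt.
  destruct (RC_eps h 0 Hrc (h b - h 0) ltac:(lra)) as (del & Hdel & Hh).
  set (s := Rmin (del / 2) (b / 2)).
  assert (Hs0 : 0 < s) by (unfold s; apply Rmin_pos; lra).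
  assert (Hsb : s < b) by (unfold s; pose proof (Rmin_r (del/2) (b/2)); lra).
  assert (Hsd : s < del) by (unfold s; pose proof (Rmin_l (del/2) (b/2)); lra).
  assert (Hhs : Rabs (h s - h 0) < h b - h 0) by (apply Hh; lra).
  assert (HT : forall x, 0 < x <= b -> Rbar_lt x T).
  { intros x Hx. eapply Rbar_le_lt_trans; [|exact HbT]. simpl. lra. }
  destruct (MVT_gen h s b (fun t => if Rlt_dec t b then dh t else 0)) as (z & Hz & Heq).
  - intros x Hx. rewrite Rmin_left in Hx by lra. rewrite Rmax_right in Hx by lra.
    destruct (Rlt_dec x b); [|lra]. apply Hd; [lra|]. apply HT; lra.
  - intros x Hx. rewrite Rmin_left in Hx by lra. rewrite Rmax_right in Hx by lra.
    apply continuity_pt_filterlim. apply (ex_derive_continuous (K:=R_AbsRing) (V:=R_NormedModule)). exists (dh x). apply Hd; [lra|apply HT; lra].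
  - rewrite Rmin_left in Hz by lra. rewrite Rmax_right in Hz by lra.
    assert (Hdz : (if Rlt_dec z b then dh z else 0) <= 0).
    { destruct (Rlt_dec z b); [apply Hneg; lra|lra]. }
    pose proof (Rabs_def2 _ _ Hhs). nra.
Qed.

Lemma decay (g dg : R -> R) (c L : R) (T : Rbar) :
  0 < c -> g 0 < L -> (forall t, 0 <= t -> Rbar_lt t T -> 0 <= g t) ->
  RC g 0 -> (forall t, 0 < t -> Rbar_lt t T -> is_derive g t (dg t)) ->
  (forall t, 0 < t -> Rbar_lt t T -> g t < L -> dg t <= - c * g t) ->
  forall t, 0 <= t -> Rbar_lt t T -> g t * exp (c * t) <= g 0.
Proof.
  intros Hc HL Hpos Hrc Hd Hdec.
  set (h := fun s => g s * exp (c * s)).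
  set (dh := fun s => dg s * exp (c * s) + g s * (c * exp (c * s))).
  assert (Hdh : forall t, 0 < t -> Rbar_lt t T -> is_derive h t (dh t)).
  { intros t Ht HtT. unfold h, dh. apply (is_derive_mult g (fun s => exp (c * s))); [apply Hd; auto| |].
    - evar (l : R). replace (c * exp (c * t)) with l. 2:{ unfold l. reflexivity. }
      auto_derive; auto. unfold l. ring.
    - intros; apply Rmult_comm. }
  assert (Hrch : RC h 0).
  { unfold h. apply RC_mult; auto. apply RC_of_cont. apply (ex_derive_continuous (K:=R_AbsRing) (V:=R_NormedModule)). auto_derive. auto. }
  assert (Hh0 : h 0 = g 0) by (unfold h; rewrite Rmult_0_r, exp_0; ring).
  assert (Hopen : forall t, 0 <= t -> Rbar_lt t T -> g t < L -> exists eta, 0 < eta /\ forall s, t <= s < t + eta -> g s < L).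
  { intros t Ht HtT Hgt.
    assert (Hrct : RC g t).
    { destruct (Req_dec t 0) as [->|Ht0]; auto. apply RC_of_cont. apply (ex_derive_continuous (K:=R_AbsRing) (V:=R_NormedModule)).
      exists (dg t). apply Hd; auto; lra. }
    destruct (RC_eps g t Hrct (L - g t) ltac:(lra)) as (del & Hdel & Hg).
    exists del. split; auto. intros s Hs. destruct (Req_dec s t) as [->|Hst]; auto.
    assert (Hh' : Rabs (g s - g t) < L - g t) by (apply Hg; lra). pose proof (Rabs_def2 _ _ Hh'). lra. }
  assert (Key : forall t1, 0 <= t1 -> Rbar_lt t1 T -> forall tau, 0 <= tau <= t1 -> g tau < L).
  { intros t1 Ht1 Ht1T.
    set (E := fun s => 0 <= s <= t1 /\ forall tau, 0 <= tau <= s -> g tau < L).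
    assert (HE0 : E 0). { split; [lra|]. intros tau Htau. replace tau with 0 by lra. exact HL. }
    assert (HEb : bound E). { exists t1. intros x [Hx _]. lra. }
    destruct (completeness E HEb (ex_intro _ 0 HE0)) as [m [Hub Hlub]].
    assert (Hm0 : 0 <= m) by (apply Hub; exact HE0).
    assert (Hm1 : m <= t1) by (apply Hlub; intros x [Hx _]; lra).
    assert (HmT : forall x, 0 <= x <= t1 -> Rbar_lt x T).
    { intros x Hx. eapply Rbar_le_lt_trans; [|exact Ht1T]. simpl. lra. }
    assert (Hbelow : forall tau, 0 <= tau < m -> g tau < L).
    { intros tau Htau. apply Rnot_le_lt. intros Hge.
      assert (Hub' : is_upper_bound E tau).
      { intros x [Hx Hx2]. apply Rnot_lt_le. intros Hlt. specialize (Hx2 tau ltac:(lra)). lra. }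
      specialize (Hlub tau Hub'). lra. }
    assert (Hhm : h m <= h 0).
    { apply (mono h dh m T Hm0 (HmT m ltac:(lra)) Hdh); [|exact Hrch].
      intros t Ht. unfold dh. specialize (Hdec t ltac:(lra) (HmT t ltac:(lra)) (Hbelow t ltac:(lra))).
      pose proof (exp_pos (c * t)).
      replace (dg t * exp (c * t) + g t * (c * exp (c * t))) with ((dg t + c * g t) * exp (c * t)) by ring.
      apply Rmult_le_0_r; lra. }
    assert (Hgm : g m < L).
    { rewrite Hh0 in Hhm. unfold h in Hhm.
      assert (1 <= exp (c * m)).
      { rewrite <- exp_0. destruct (Req_dec m 0) as [->|]. rewrite Rmult_0_r; lra.
        apply Rlt_le, exp_increasing. nra. }
      pose proof (Hpos m Hm0 (HmT m ltac:(lra))). nra. }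
    assert (HEm : forall tau, 0 <= tau <= m -> g tau < L).
    { intros tau Htau. destruct (Req_dec tau m) as [->|]; auto. apply Hbelow; lra. }
    destruct (Req_dec m t1) as [<-|Hmt]; auto.
    destruct (Hopen m Hm0 (HmT m ltac:(lra)) Hgm) as (eta & Heta & Hs).
    set (s := Rmin (m + eta / 2) t1).
    assert (HEs : E s).
    { unfold s. split. { split; [apply Rmin_glb; lra|apply Rmin_r]. }
      intros tau Htau. destruct (Rle_dec tau m); [apply HEm; lra|].
      apply Hs. pose proof (Rmin_l (m + eta/2) t1). lra. }
    specialize (Hub s HEs). unfold s in Hub.
    exfalso. assert (m < Rmin (m + eta / 2) t1) by (apply Rmin_glb_lt; lra). lra. }
  intros t Ht HtT. fold (h t). rewrite <- Hh0.
  apply (mono h dh t T); auto.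
  intros s Hs. assert (HsT : Rbar_lt s T) by (eapply Rbar_le_lt_trans; [|exact HtT]; simpl; lra).
  unfold dh. specialize (Hdec s ltac:(lra) HsT (Key t Ht HtT s ltac:(lra))).
  pose proof (exp_pos (c * s)).
  replace (dg s * exp (c * s) + g s * (c * exp (c * s))) with ((dg s + c * g s) * exp (c * s)) by ring.
  apply Rmult_le_0_r; lra.
Qed.


Lemma dist4_sq q p : dist4 q p ^ 2 <=
  (c1 q - c1 p) ^ 2 + (c2 q - c2 p) ^ 2 + (c3 q - c3 p) ^ 2 + (c4 q - c4 p) ^ 2.
Proof.
  rewrite <- (pow2_abs (c1 q - c1 p)), <- (pow2_abs (c2 q - c2 p)),
    <- (pow2_abs (c3 q - c3 p)), <- (pow2_abs (c4 q - c4 p)).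
  pose proof (pow2_ge_0 (Rabs (c1 q - c1 p))); pose proof (pow2_ge_0 (Rabs (c2 q - c2 p)));
  pose proof (pow2_ge_0 (Rabs (c3 q - c3 p))); pose proof (pow2_ge_0 (Rabs (c4 q - c4 p))).
  unfold dist4, Rmax. repeat destruct Rle_dec; lra.
Qed.

Section Lyap.
Variables (V : state -> state) (p : state).
Variables (J11 J12 J13 J14 J21 J22 J23 J24 J31 J32 J33 J34 J41 J42 J43 J44 w1 w2 w3 w4 c : R).
Hypothesis Heq : equilibrium V p.
Hypothesis HQ1 : Q4 (fun q => c1 (V q)) p J11 J12 J13 J14.
Hypothesis HQ2 : Q4 (fun q => c2 (V q)) p J21 J22 J23 J24.
Hypothesis HQ3 : Q4 (fun q => c3 (V q)) p J31 J32 J33 J34.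
Hypothesis HQ4 : Q4 (fun q => c4 (V q)) p J41 J42 J43 J44.
Hypotheses (Hw1 : 0 < w1) (Hw2 : 0 < w2) (Hw3 : 0 < w3) (Hw4 : 0 < w4) (Hc : 0 < c).
Hypothesis Hform : forall y1 y2 y3 y4,
  w1 * y1 * (J11 * y1 + J12 * y2 + J13 * y3 + J14 * y4)
  + w2 * y2 * (J21 * y1 + J22 * y2 + J23 * y3 + J24 * y4)
  + w3 * y3 * (J31 * y1 + J32 * y2 + J33 * y3 + J34 * y4)
  + w4 * y4 * (J41 * y1 + J42 * y2 + J43 * y3 + J44 * y4)
  <= - c * (w1 * y1 ^ 2 + w2 * y2 ^ 2 + w3 * y3 ^ 2 + w4 * y4 ^ 2).

Definition W (q : state) := w1 * ((c1 q - c1 p) * (c1 q - c1 p)) + w2 * ((c2 q - c2 p) * (c2 q - c2 p))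
  + w3 * ((c3 q - c3 p) * (c3 q - c3 p)) + w4 * ((c4 q - c4 p) * (c4 q - c4 p)).
Definition LF (q : state) := w1 * (c1 q - c1 p) * c1 (V q) + w2 * (c2 q - c2 p) * c2 (V q)
  + w3 * (c3 q - c3 p) * c3 (V q) + w4 * (c4 q - c4 p) * c4 (V q).
Definition wm := Rmin (Rmin w1 w2) (Rmin w3 w4).
Definition wM := w1 + w2 + w3 + w4.

Lemma wm_pos : 0 < wm.
Proof. unfold wm; repeat apply Rmin_pos; auto. Qed.
Lemma wm_le : wm <= w1 /\ wm <= w2 /\ wm <= w3 /\ wm <= w4.
Proof.
  unfold wm. pose proof (Rmin_l (Rmin w1 w2) (Rmin w3 w4)); pose proof (Rmin_r (Rmin w1 w2) (Rmin w3 w4)).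
  pose proof (Rmin_l w1 w2); pose proof (Rmin_r w1 w2); pose proof (Rmin_l w3 w4); pose proof (Rmin_r w3 w4). lra.
Qed.

Lemma W_lower q : wm * dist4 q p ^ 2 <= W q.
Proof.
  pose proof (dist4_sq q p). destruct wm_le as (A1 & A2 & A3 & A4). pose proof wm_pos.
  unfold W. simpl in *.
  pose proof (Rmult_le_compat_r ((c1 q - c1 p) * (c1 q - c1 p)) _ _ (Rle_0_sqr (c1 q - c1 p)) A1).
  pose proof (Rmult_le_compat_r ((c2 q - c2 p) * (c2 q - c2 p)) _ _ (Rle_0_sqr (c2 q - c2 p)) A2).
  pose proof (Rmult_le_compat_r ((c3 q - c3 p) * (c3 q - c3 p)) _ _ (Rle_0_sqr (c3 q - c3 p)) A3).
  pose proof (Rmult_le_compat_r ((c4 q - c4 p) * (c4 q - c4 p)) _ _ (Rle_0_sqr (c4 q - c4 p)) A4).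
  nra.
Qed.

Lemma sq_le_d x q : Rabs x <= dist4 q p -> x * x <= dist4 q p * dist4 q p.
Proof. intros H. pose proof (Rabs_pos x). pose proof (pow2_abs x). simpl in H1.
  replace (x * x) with (x * (x * 1)) by ring. rewrite <- H1. nra. Qed.

Lemma W_upper q : W q <= wM * dist4 q p ^ 2.
Proof.
  pose proof (sq_le_d _ q (dd1 q p)); pose proof (sq_le_d _ q (dd2 q p));
  pose proof (sq_le_d _ q (dd3 q p)); pose proof (sq_le_d _ q (dd4 q p)).
  unfold W, wM. simpl.
  pose proof (Rmult_le_compat_l w1 _ _ ltac:(lra) H).
  pose proof (Rmult_le_compat_l w2 _ _ ltac:(lra) H0).
  pose proof (Rmult_le_compat_l w3 _ _ ltac:(lra) H1).
  pose proof (Rmult_le_compat_l w4 _ _ ltac:(lra) H2). nra.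
Qed.

Lemma W_nonneg q : 0 <= W q.
Proof. unfold W. pose proof (Rle_0_sqr (c1 q - c1 p)); pose proof (Rle_0_sqr (c2 q - c2 p));
  pose proof (Rle_0_sqr (c3 q - c3 p)); pose proof (Rle_0_sqr (c4 q - c4 p)); unfold Rsqr in *. nra. Qed.

Lemma local_ineq : exists d0, 0 < d0 /\ forall q, dist4 q p < d0 -> LF q <= - (c / 2) * W q.
Proof.
  assert (E : V p = (0, 0, 0, 0)) by exact Heq.
  destruct HQ1 as (C1 & e1 & He1 & H1). destruct HQ2 as (C2 & e2 & He2 & H2).
  destruct HQ3 as (C3 & e3 & He3 & H3). destruct HQ4 as (C4 & e4 & He4 & H4).
  rewrite E in H1, H2, H3, H4. simpl in H1, H2, H3, H4.
  set (S := w1 * Rabs C1 + w2 * Rabs C2 + w3 * Rabs C3 + w4 * Rabs C4).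
  assert (HS : 0 <= S).
  { unfold S. pose proof (Rabs_pos C1); pose proof (Rabs_pos C2); pose proof (Rabs_pos C3); pose proof (Rabs_pos C4). nra. }
  pose proof wm_pos as Hwm.
  exists (Rmin (Rmin (Rmin e1 e2) (Rmin e3 e4)) (c * wm / (2 * (S + 1)))).
  split. { repeat apply Rmin_pos; auto. apply Rdiv_lt_0_compat; nra. }
  intros q Hq.
  assert (Hqa : dist4 q p < Rmin (Rmin e1 e2) (Rmin e3 e4)) by (eapply Rlt_le_trans; [apply Hq|apply Rmin_l]).
  assert (Hqb : dist4 q p < c * wm / (2 * (S + 1))) by (eapply Rlt_le_trans; [apply Hq|apply Rmin_r]).
  pose proof (Rmin_l (Rmin e1 e2) (Rmin e3 e4)); pose proof (Rmin_r (Rmin e1 e2) (Rmin e3 e4)).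
  pose proof (Rmin_l e1 e2); pose proof (Rmin_r e1 e2); pose proof (Rmin_l e3 e4); pose proof (Rmin_r e3 e4).
  specialize (H1 q ltac:(lra)). specialize (H2 q ltac:(lra)). specialize (H3 q ltac:(lra)). specialize (H4 q ltac:(lra)).
  set (y1 := c1 q - c1 p) in *. set (y2 := c2 q - c2 p) in *. set (y3 := c3 q - c3 p) in *. set (y4 := c4 q - c4 p) in *.
  set (D := dist4 q p) in *.
  set (R1 := c1 (V q) - (J11 * y1 + J12 * y2 + J13 * y3 + J14 * y4)).
  set (R2 := c2 (V q) - (J21 * y1 + J22 * y2 + J23 * y3 + J24 * y4)).
  set (R3 := c3 (V q) - (J31 * y1 + J32 * y2 + J33 * y3 + J34 * y4)).
  set (R4 := c4 (V q) - (J41 * y1 + J42 * y2 + J43 * y3 + J44 * y4)).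
  assert (B1 : Rabs R1 <= Rabs C1 * D ^ 2) by (unfold R1; replace (c1 (V q) - _) with (c1 (V q) - 0 - (J11 * y1 + J12 * y2 + J13 * y3 + J14 * y4)) by ring; eapply Rle_trans; [apply H1|]; apply Rmult_le_compat_r; [apply pow2_ge_0|apply Rle_abs]).
  assert (B2 : Rabs R2 <= Rabs C2 * D ^ 2) by (unfold R2; replace (c2 (V q) - _) with (c2 (V q) - 0 - (J21 * y1 + J22 * y2 + J23 * y3 + J24 * y4)) by ring; eapply Rle_trans; [apply H2|]; apply Rmult_le_compat_r; [apply pow2_ge_0|apply Rle_abs]).
  assert (B3 : Rabs R3 <= Rabs C3 * D ^ 2) by (unfold R3; replace (c3 (V q) - _) with (c3 (V q) - 0 - (J31 * y1 + J32 * y2 + J33 * y3 + J34 * y4)) by ring; eapply Rle_trans; [apply H3|]; apply Rmult_le_compat_r; [apply pow2_ge_0|apply Rle_abs]).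
  assert (B4 : Rabs R4 <= Rabs C4 * D ^ 2) by (unfold R4; replace (c4 (V q) - _) with (c4 (V q) - 0 - (J41 * y1 + J42 * y2 + J43 * y3 + J44 * y4)) by ring; eapply Rle_trans; [apply H4|]; apply Rmult_le_compat_r; [apply pow2_ge_0|apply Rle_abs]).
  assert (Hlf : LF q = (w1 * y1 * (J11 * y1 + J12 * y2 + J13 * y3 + J14 * y4)
    + w2 * y2 * (J21 * y1 + J22 * y2 + J23 * y3 + J24 * y4)
    + w3 * y3 * (J31 * y1 + J32 * y2 + J33 * y3 + J34 * y4)
    + w4 * y4 * (J41 * y1 + J42 * y2 + J43 * y3 + J44 * y4))
    + (w1 * y1 * R1 + w2 * y2 * R2 + w3 * y3 * R3 + w4 * y4 * R4)).
  { unfold LF, R1, R2, R3, R4. fold y1 y2 y3 y4. ring. }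
  assert (HW : W q = w1 * y1 ^ 2 + w2 * y2 ^ 2 + w3 * y3 ^ 2 + w4 * y4 ^ 2) by (unfold W; fold y1 y2 y3 y4; ring).
  pose proof (Hform y1 y2 y3 y4) as HF.
  assert (HD0 : 0 <= D) by apply dd0.
  assert (Hrem : forall (w y R Ci : R), 0 < w -> Rabs y <= D -> Rabs R <= Rabs Ci * D ^ 2 -> w * y * R <= w * Rabs Ci * D ^ 3).
  { intros w y R0 Ci Hw Hy HR. eapply Rle_trans; [apply Rle_abs|]. rewrite !Rabs_mult, (Rabs_right w) by lra.
    replace (w * Rabs Ci * D ^ 3) with (w * (D * (Rabs Ci * D ^ 2))) by ring.
    rewrite Rmult_assoc. apply Rmult_le_compat_l; [lra|]. apply Rmult_le_compat; auto using Rabs_pos. }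
  pose proof (Hrem w1 y1 R1 C1 Hw1 (dd1 q p) B1). pose proof (Hrem w2 y2 R2 C2 Hw2 (dd2 q p) B2).
  pose proof (Hrem w3 y3 R3 C3 Hw3 (dd3 q p) B3). pose proof (Hrem w4 y4 R4 C4 Hw4 (dd4 q p) B4).
  assert (Hsum : w1 * y1 * R1 + w2 * y2 * R2 + w3 * y3 * R3 + w4 * y4 * R4 <= S * D ^ 3) by (unfold S; lra).
  pose proof (W_lower q) as HL. fold D in HL.
  assert (HSD : S * D <= c * wm / 2).
  { apply (Rmult_lt_compat_l (2 * (S + 1))) in Hqb; [|lra].
    replace (2 * (S + 1) * (c * wm / (2 * (S + 1)))) with (c * wm) in Hqb by (field; lra). nra. }
  assert (S * D ^ 3 <= (c / 2) * W q).
  { replace (S * D ^ 3) with ((S * D) * D ^ 2) by ring.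
    apply Rle_trans with ((c * wm / 2) * D ^ 2). { apply Rmult_le_compat_r; [apply pow2_ge_0|exact HSD]. }
    replace (c * wm / 2 * D ^ 2) with ((c / 2) * (wm * D ^ 2)) by field. apply Rmult_le_compat_l; lra. }
  rewrite Hlf. rewrite HW in *. lra.
Qed.


Lemma wm_wM : wm <= wM.
Proof. destruct wm_le as (A1 & _). unfold wM. lra. Qed.

Lemma deriv_W phi T : solution_on V phi T -> forall t, 0 < t -> Rbar_lt t T ->
  is_derive (fun s => W (phi s)) t (2 * LF (phi t)).
Proof.
  intros Hsol t Ht HtT.
  destruct (Hsol c1 ltac:(simpl; tauto)) as [_ D1]. specialize (D1 t Ht HtT).
  destruct (Hsol c2 ltac:(simpl; tauto)) as [_ D2]. specialize (D2 t Ht HtT).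
  destruct (Hsol c3 ltac:(simpl; tauto)) as [_ D3]. specialize (D3 t Ht HtT).
  destruct (Hsol c4 ltac:(simpl; tauto)) as [_ D4]. specialize (D4 t Ht HtT).
  set (f1 := fun s => c1 (phi s)) in *. set (f2 := fun s => c2 (phi s)) in *.
  set (f3 := fun s => c3 (phi s)) in *. set (f4 := fun s => c4 (phi s)) in *.
  assert (E1 : Derive (fun x => f1 x) t = c1 (V (phi t))) by (apply is_derive_unique; exact D1).
  assert (E2 : Derive (fun x => f2 x) t = c2 (V (phi t))) by (apply is_derive_unique; exact D2).
  assert (E3 : Derive (fun x => f3 x) t = c3 (V (phi t))) by (apply is_derive_unique; exact D3).
  assert (E4 : Derive (fun x => f4 x) t = c4 (V (phi t))) by (apply is_derive_unique; exact D4).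
  change (is_derive (fun s => w1 * ((f1 s - c1 p) * (f1 s - c1 p)) + w2 * ((f2 s - c2 p) * (f2 s - c2 p))
     + w3 * ((f3 s - c3 p) * (f3 s - c3 p)) + w4 * ((f4 s - c4 p) * (f4 s - c4 p))) t (2 * LF (phi t))).
  auto_derive.
  - repeat split; eexists; first [exact D1|exact D2|exact D3|exact D4].
  - rewrite E1, E2, E3, E4. unfold LF, f1, f2, f3, f4. ring.
Qed.

Lemma RC_W phi T : solution_on V phi T -> RC (fun s => W (phi s)) 0.
Proof.
  intros Hsol.
  destruct (Hsol c1 ltac:(simpl; tauto)) as [R1 _]. destruct (Hsol c2 ltac:(simpl; tauto)) as [R2 _].
  destruct (Hsol c3 ltac:(simpl; tauto)) as [R3 _]. destruct (Hsol c4 ltac:(simpl; tauto)) as [R4 _].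
  unfold W.
  repeat first [apply RC_plus | apply RC_mult | apply RC_minus | apply RC_const | exact R1 | exact R2 | exact R3 | exact R4].
Qed.

Lemma key (eps' d0 : R) : 0 < eps' -> eps' <= d0 ->
  (forall q, dist4 q p < d0 -> LF q <= - (c / 2) * W q) ->
  forall phi T, solution_on V phi T -> dist4 (phi 0) p < eps' * wm / (2 * wM) ->
  (W (phi 0) < wm * eps' ^ 2) /\ (forall t, 0 <= t -> Rbar_lt t T -> W (phi t) * exp (c * t) <= W (phi 0)).
Proof.
  intros He Hed Hloc phi T Hsol Hd.
  pose proof wm_pos as Hwm. pose proof wm_wM as HwM.
  assert (H0 : W (phi 0) < wm * eps' ^ 2).
  { pose proof (W_upper (phi 0)). pose proof (dd0 (phi 0) p).
    assert (dist4 (phi 0) p ^ 2 <= (eps' * wm / (2 * wM)) ^ 2) by (apply pow_incr; lra).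
    assert (wM * (eps' * wm / (2 * wM)) ^ 2 < wm * eps' ^ 2).
    { replace (wM * (eps' * wm / (2 * wM)) ^ 2) with (wm * eps' ^ 2 * (wm / (4 * wM))) by (field; lra).
      assert (wm / (4 * wM) < 1). { apply (Rmult_lt_reg_r (4 * wM)); [lra|]. field_simplify; lra. }
      assert (0 < wm * eps' ^ 2) by (apply Rmult_lt_0_compat; [lra|apply pow_lt; lra]). nra. }
    nra. }
  split; [exact H0|].
  apply (decay (fun s => W (phi s)) (fun s => 2 * LF (phi s)) c (wm * eps' ^ 2) T Hc H0).
  - intros; apply W_nonneg.
  - eapply RC_W; eauto.
  - intros; eapply deriv_W; eauto.
  - intros t Ht HtT Hlt. pose proof (W_lower (phi t)). pose proof (dd0 (phi t) p).
    assert (dist4 (phi t) p < eps').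
    { apply Rnot_le_lt. intros Hge. assert (eps' ^ 2 <= dist4 (phi t) p ^ 2) by (apply pow_incr; lra). nra. }
    specialize (Hloc (phi t) ltac:(lra)). lra.
Qed.

Lemma lyap_stable : loc_asympt_stable V p.
Proof.
  destruct local_ineq as (d0 & Hd0 & Hloc).
  pose proof wm_pos as Hwm. pose proof wm_wM as HwM.
  split; [exact Heq|]. split.
  - intros eps Heps. set (e' := Rmin eps d0).
    assert (He' : 0 < e') by (apply Rmin_pos; lra).
    exists (e' * wm / (2 * wM)). split. { apply Rdiv_lt_0_compat; nra. }
    intros phi T Hsol Hd t Ht HtT.
    destruct (key e' d0 He' (Rmin_r _ _) Hloc phi T Hsol Hd) as [H0 Hdec].
    specialize (Hdec t Ht HtT).
    assert (1 <= exp (c * t)).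
    { rewrite <- exp_0. destruct (Req_dec t 0) as [->|]. rewrite Rmult_0_r; lra.
      apply Rlt_le, exp_increasing. nra. }
    pose proof (W_nonneg (phi t)). pose proof (W_lower (phi t)). pose proof (dd0 (phi t) p).
    assert (W (phi t) < wm * e' ^ 2) by nra.
    assert (dist4 (phi t) p < e').
    { apply Rnot_le_lt. intros Hge. assert (e' ^ 2 <= dist4 (phi t) p ^ 2) by (apply pow_incr; lra). nra. }
    assert (e' <= eps) by apply Rmin_l. lra.
  - exists (d0 * wm / (2 * wM)). split. { apply Rdiv_lt_0_compat; nra. }
    intros phi Hsol Hd.
    destruct (key d0 d0 Hd0 (Rle_refl _) Hloc phi p_infty Hsol Hd) as [H0 Hdec].
    assert (Hconv : forall eps, 0 < eps -> exists M, forall t, M < t -> dist4 (phi t) p < eps).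
    { intros eps Heps. set (g0 := W (phi 0)).
      assert (Hg0 : 0 <= g0) by apply W_nonneg.
      exists (Rmax 0 (g0 / (wm * eps ^ 2 * c))). intros t Ht.
      assert (Ht0 : 0 < t) by (eapply Rle_lt_trans; [apply Rmax_l|exact Ht]).
      assert (Ht1 : g0 / (wm * eps ^ 2 * c) < t) by (eapply Rle_lt_trans; [apply Rmax_r|exact Ht]).
      assert (Hpos : 0 < wm * eps ^ 2 * c) by (apply Rmult_lt_0_compat; [apply Rmult_lt_0_compat; [lra|apply pow_lt; lra]|lra]).
      assert (Hg0' : g0 < wm * eps ^ 2 * (c * t)).
      { apply (Rmult_lt_compat_l (wm * eps ^ 2 * c)) in Ht1; [|lra].
        replace (wm * eps ^ 2 * c * (g0 / (wm * eps ^ 2 * c))) with g0 in Ht1 by (field; lra). lra. }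
      assert (Hexp : c * t < exp (c * t)).
      { pose proof (exp_ineq1 (c * t) ltac:(nra)). lra. }
      specialize (Hdec t ltac:(lra) I). fold g0 in Hdec.
      pose proof (W_nonneg (phi t)). pose proof (W_lower (phi t)). pose proof (dd0 (phi t) p).
      assert (0 < wm * eps ^ 2) by (apply Rmult_lt_0_compat; [lra|apply pow_lt; lra]).
      assert (W (phi t) * (c * t) <= W (phi t) * exp (c * t)) by (apply Rmult_le_compat_l; lra).
      assert (W (phi t) < wm * eps ^ 2) by nra.
      apply Rnot_le_lt. intros Hge. assert (eps ^ 2 <= dist4 (phi t) p ^ 2) by (apply pow_incr; lra). nra. }
    intros f Hin. apply is_lim_spec. intros eps.
    destruct (Hconv eps (cond_pos eps)) as [M HM]. exists M. intros t Ht. specialize (HM t Ht).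
    simpl in Hin. destruct Hin as [<-|[<-|[<-|[<-|[]]]]].
    + eapply Rle_lt_trans; [apply dd1|exact HM].
    + eapply Rle_lt_trans; [apply dd2|exact HM].
    + eapply Rle_lt_trans; [apply dd3|exact HM].
    + eapply Rle_lt_trans; [apply dd4|exact HM].
Qed.

End Lyap.


Lemma Q4_tup1 F1 F2 F3 F4 p g1 g2 g3 g4 : Q4 F1 p g1 g2 g3 g4 -> Q4 (fun q => c1 (F1 q, F2 q, F3 q, F4 q)) p g1 g2 g3 g4.
Proof. intros H; exact H. Qed.
Lemma Q4_tup2 F1 F2 F3 F4 p g1 g2 g3 g4 : Q4 F2 p g1 g2 g3 g4 -> Q4 (fun q => c2 (F1 q, F2 q, F3 q, F4 q)) p g1 g2 g3 g4.
Proof. intros H; exact H. Qed.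
Lemma Q4_tup3 F1 F2 F3 F4 p g1 g2 g3 g4 : Q4 F3 p g1 g2 g3 g4 -> Q4 (fun q => c3 (F1 q, F2 q, F3 q, F4 q)) p g1 g2 g3 g4.
Proof. intros H; exact H. Qed.
Lemma Q4_tup4 F1 F2 F3 F4 p g1 g2 g3 g4 : Q4 F4 p g1 g2 g3 g4 -> Q4 (fun q => c4 (F1 q, F2 q, F3 q, F4 q)) p g1 g2 g3 g4.
Proof. intros H; exact H. Qed.

Ltac q4step K1 K2 a HK1 HK2 Ha :=
  first [ apply Q4_const | apply Q4_c1 | apply Q4_c2 | apply Q4_c3 | apply Q4_c4
        | eapply Q4_minus | eapply Q4_plus | eapply Q4_div | eapply Q4_inv | eapply Q4_mult | eapply Q4_pow2
        | (eapply Q4_K with (K := K1); [|exact HK1])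
        | (eapply Q4_K with (K := K2); [|exact HK2])
        | (eapply Q4_DK with (K := K1); [|exact HK1])
        | (eapply Q4_DK with (K := K2); [|exact HK2])
        | (eapply Q4_A with (a := a) (l := nil); [| |exact Ha])
        | (eapply Q4_A with (a := a) (l := true :: nil); [| |exact Ha])
        | (eapply Q4_A with (a := a) (l := false :: nil); [| |exact Ha]) ].

Ltac q4 K1 K2 a HK1 HK2 Ha :=
  repeat (match goal with |- Q4 _ _ _ _ _ _ => q4step K1 K2 a HK1 HK2 Ha end).


Lemma caseI V p J11 J12 J13 J14 J21 J22 J23 J24 J31 J32 J33 J34 J41 J42 J43 J44 :
  equilibrium V p ->
  Q4 (fun q => c1 (V q)) p J11 J12 J13 J14 -> Q4 (fun q => c2 (V q)) p J21 J22 J23 J24 ->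
  Q4 (fun q => c3 (V q)) p J31 J32 J33 J34 -> Q4 (fun q => c4 (V q)) p J41 J42 J43 J44 ->
  J14 = 0 -> J21 = 0 -> J23 = 0 -> J24 = 0 -> J31 = 0 -> J34 = 0 ->
  J11 < 0 -> J22 < 0 -> J33 < 0 -> J44 < 0 -> loc_asympt_stable V p.
Proof.
  intros Heq H1 H2 H3 H4 E14 E21 E23 E24 E31 E34 N11 N22 N33 N44.
  destruct (tri J22 J32 J33 J12 J13 J11 J42 J43 J41 J44 N22 N33 N11 N44) as (w1 & w2 & w3 & w4 & c & P1 & P2 & P3 & P4 & Pc & Hf).
  apply (lyap_stable V p J11 J12 J13 J14 J21 J22 J23 J24 J31 J32 J33 J34 J41 J42 J43 J44 w3 w1 w2 w4 c); auto.
  intros y1 y2 y3 y4. specialize (Hf y2 y3 y1 y4). subst. lra.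
Qed.

Lemma caseII V p J11 J12 J13 J14 J21 J22 J23 J24 J31 J32 J33 J34 J41 J42 J43 J44 :
  equilibrium V p ->
  Q4 (fun q => c1 (V q)) p J11 J12 J13 J14 -> Q4 (fun q => c2 (V q)) p J21 J22 J23 J24 ->
  Q4 (fun q => c3 (V q)) p J31 J32 J33 J34 -> Q4 (fun q => c4 (V q)) p J41 J42 J43 J44 ->
  J12 = 0 -> J13 = 0 -> J14 = 0 -> J23 = 0 -> J24 = 0 -> J43 = 0 ->
  J11 < 0 -> J22 < 0 -> J33 < 0 -> J44 < 0 -> loc_asympt_stable V p.
Proof.
  intros Heq H1 H2 H3 H4 E12 E13 E14 E23 E24 E43 N11 N22 N33 N44.
  destruct (tri J11 J21 J22 J41 J42 J44 J31 J32 J34 J33 N11 N22 N44 N33) as (w1 & w2 & w3 & w4 & c & P1 & P2 & P3 & P4 & Pc & Hf).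
  apply (lyap_stable V p J11 J12 J13 J14 J21 J22 J23 J24 J31 J32 J33 J34 J41 J42 J43 J44 w1 w2 w4 w3 c); auto.
  intros y1 y2 y3 y4. specialize (Hf y1 y2 y4 y3). subst. lra.
Qed.


Ltac pos := repeat first [ assumption | apply Rmult_lt_0_compat | apply Rinv_0_lt_compat | apply pow_lt ]; auto; try lra.
Ltac nz := cbv beta; cbn [Defs.c1 Defs.c2 Defs.c3 Defs.c4 fst snd];
  first [ assumption | (apply pow_nonzero; assumption) | lra ].
Ltac simpJ := cbv beta; cbn [Defs.c1 Defs.c2 Defs.c3 Defs.c4 fst snd pderivs].

Theorem corollary1
  (K1 K2 : R -> R) (a : R -> R -> R) (d r1 r2 h e s1 s2 : R)
  (hK1 : pos_bounded1 K1) (hK1s : smooth1 K1)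
  (hK2 : pos_bounded1 K2) (hK2s : smooth1 K2)
  (ha : pos_bounded2 a) (has : smooth2 a)
  (hd : 0 <= d) (hr1 : 0 < r1) (hr2 : 0 < r2) (hh : 0 < h) (he : 0 < e)
  (hs1 : 0 < s1) (hs2 : 0 < s2) :
  let V := hp_field K1 K2 a r1 r2 h e d s1 s2 in
  (* (i) host-only equilibrium *)
  (forall u1 u2 : R,
     Derive K1 u1 = 0 -> pd2 a u1 u2 = 0 ->
     equilibrium V (K1 u1, 0, u1, u2) /\
     (0 < e * a u1 u2 * K1 u1 / (1 + h * a u1 u2 * K1 u1) ->
      e * a u1 u2 * K1 u1 / (1 + h * a u1 u2 * K1 u1) < d - r2 ->
      Derive_n K1 2 u1 < 0 ->
      pd2 (pd2 a) u1 u2 < 0 ->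
      loc_asympt_stable V (K1 u1, 0, u1, u2))) /\
  (* (ii) parasite-only equilibrium *)
  (d < r2 ->
   forall u1 u2 : R,
     Derive K2 u2 = 0 -> pd1 a u1 u2 = 0 ->
     equilibrium V (0, K2 u2 * (1 - d / r2), u1, u2) /\
     (r1 / a u1 u2 < K2 u2 * (1 - d / r2) ->
      0 < pd1 (pd1 a) u1 u2 ->
      Derive_n K2 2 u2 < 0 ->
      loc_asympt_stable V (0, K2 u2 * (1 - d / r2), u1, u2))).
Proof.
  intros V. destruct hK1 as [hK1p _]. destruct hK2 as [hK2p _]. destruct ha as [hap _].
  assert (Hs1 : 0 < s1 ^ 2) by (apply pow_lt; lra).
  assert (Hs2 : 0 < s2 ^ 2) by (apply pow_lt; lra).
  split.
  - intros u1 u2 HK1' Ha2.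
    pose proof (hK1p u1) as HKp. pose proof (hap u1 u2) as HAp.
    assert (HKn : K1 u1 <> 0) by lra.
    assert (HK2n : K2 u2 <> 0) by (pose proof (hK2p u2); lra).
    assert (HDp : 0 < 1 + h * a u1 u2 * K1 u1).
    { assert (0 < h * a u1 u2 * K1 u1) by pos. lra. }
    assert (HDn : 1 + h * a u1 u2 * K1 u1 <> 0) by lra.
    assert (HD1 : Derive_n K1 1 u1 = 0) by exact HK1'.
    assert (Heq : equilibrium V (K1 u1, 0, u1, u2)).
    { unfold equilibrium, V, hp_field. cbn [Defs.c1 Defs.c2 Defs.c3 Defs.c4 fst snd]. rewrite HK1', Ha2.
      match goal with |- (?A, ?B, ?C, ?D) = _ =>
        assert (EA : A = 0) by (field; repeat split; first [assumption | lra]); assert (EB : B = 0) by ring;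
        assert (EC : C = 0) by (field; repeat split; first [assumption | lra]); assert (ED : D = 0) by (field; repeat split; first [assumption | lra]) end.
      rewrite EA, EB, EC, ED. reflexivity. }
    split; [exact Heq|]. intros Hpos Hlt HK1'' Ha22.
    assert (Q1 : exists J1 J2 J3 J4, Q4 (fun q => c1 (V q)) (K1 u1, 0, u1, u2) J1 J2 J3 J4 /\ J1 < 0 /\ J4 = 0).
    { eexists _, _, _, _. split.
      { cbv beta zeta delta [V hp_field]. apply Q4_tup1. q4 K1 K2 a hK1s hK2s has. all: nz. }
      simpJ. split.
      - match goal with |- ?J < 0 => replace J with (- r1) by (rewrite ?HD1, ?HK1', ?Ha2; field; repeat split; first [assumption | lra]) end. lra.
      - rewrite ?HD1, ?HK1', ?Ha2; field; repeat split; auto. }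
    assert (Q2 : exists J1 J2 J3 J4, Q4 (fun q => c2 (V q)) (K1 u1, 0, u1, u2) J1 J2 J3 J4 /\ J1 = 0 /\ J2 < 0 /\ J3 = 0 /\ J4 = 0).
    { eexists _, _, _, _. split.
      { cbv beta zeta delta [V hp_field]. apply Q4_tup2. q4 K1 K2 a hK1s hK2s has. all: nz. }
      simpJ. split; [|split; [|split]].
      - rewrite ?HD1, ?HK1', ?Ha2; field; repeat split; auto.
      - match goal with |- ?J < 0 => replace J with (e * a u1 u2 * K1 u1 / (1 + h * a u1 u2 * K1 u1) - d + r2) by (rewrite ?HD1, ?HK1', ?Ha2; field; repeat split; first [assumption | lra]) end. lra.
      - rewrite ?HD1, ?HK1', ?Ha2; field; repeat split; auto.
      - rewrite ?HD1, ?HK1', ?Ha2; field; repeat split; auto. }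
    assert (Q3 : exists J1 J2 J3 J4, Q4 (fun q => c3 (V q)) (K1 u1, 0, u1, u2) J1 J2 J3 J4 /\ J1 = 0 /\ J3 < 0 /\ J4 = 0).
    { eexists _, _, _, _. split.
      { cbv beta zeta delta [V hp_field]. apply Q4_tup3. q4 K1 K2 a hK1s hK2s has. all: nz. }
      simpJ. split; [|split].
      - rewrite ?HD1, ?HK1', ?Ha2; field; repeat split; auto.
      - match goal with |- ?J < 0 => replace J with (- (s1 ^ 2 * r1 * (- Derive_n K1 2 u1) * / K1 u1)) by (rewrite ?HD1, ?HK1', ?Ha2; field; repeat split; first [assumption | lra]) end.
        assert (0 < s1 ^ 2 * r1 * (- Derive_n K1 2 u1) * / K1 u1) by pos. lra.
      - rewrite ?HD1, ?HK1', ?Ha2; field; repeat split; auto. }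
    assert (Q4' : exists J1 J2 J3 J4, Q4 (fun q => c4 (V q)) (K1 u1, 0, u1, u2) J1 J2 J3 J4 /\ J4 < 0).
    { eexists _, _, _, _. split.
      { cbv beta zeta delta [V hp_field]. apply Q4_tup4. q4 K1 K2 a hK1s hK2s has. all: nz. }
      simpJ.
      match goal with |- ?J < 0 => replace J with (- (s2 ^ 2 * e * K1 u1 * (- pd2 (pd2 a) u1 u2) * / (1 + h * a u1 u2 * K1 u1) ^ 2)) by (rewrite ?HD1, ?HK1', ?Ha2; field; repeat split; first [assumption | lra]) end.
      assert (0 < s2 ^ 2 * e * K1 u1 * (- pd2 (pd2 a) u1 u2) * / (1 + h * a u1 u2 * K1 u1) ^ 2) by pos. lra. }
    destruct Q1 as (J11 & J12 & J13 & J14 & H1 & N11 & E14).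
    destruct Q2 as (J21 & J22 & J23 & J24 & H2 & E21 & N22 & E23 & E24).
    destruct Q3 as (J31 & J32 & J33 & J34 & H3 & E31 & N33 & E34).
    destruct Q4' as (J41 & J42 & J43 & J44 & H4 & N44).
    exact (caseI V _ _ _ _ _ _ _ _ _ _ _ _ _ _ _ _ _ Heq H1 H2 H3 H4 E14 E21 E23 E24 E31 E34 N11 N22 N33 N44).
  - intros Hdr u1 u2 HK2' Ha1.
    pose proof (hK1p u1) as HK1p'. pose proof (hK2p u2) as HKp. pose proof (hap u1 u2) as HAp.
    assert (HK1n : K1 u1 <> 0) by lra.
    assert (HKn : K2 u2 <> 0) by lra.
    assert (HX : 0 < K2 u2 * (1 - d / r2)).
    { apply Rmult_lt_0_compat; [lra|]. assert (d / r2 < 1) by (apply (Rmult_lt_reg_r r2); [lra|]; field_simplify; lra). lra. }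
    assert (HD1 : Derive_n K2 1 u2 = 0) by exact HK2'.
    assert (HD0 : 1 + h * a u1 u2 * 0 <> 0) by lra.
    assert (Heq : equilibrium V (0, K2 u2 * (1 - d / r2), u1, u2)).
    { unfold equilibrium, V, hp_field. cbn [Defs.c1 Defs.c2 Defs.c3 Defs.c4 fst snd]. rewrite HK2', Ha1.
      match goal with |- (?A, ?B, ?C, ?D) = _ =>
        assert (EA : A = 0) by ring; assert (EB : B = 0) by (field; repeat split; lra);
        assert (EC : C = 0) by (field; repeat split; first [assumption | lra]); assert (ED : D = 0) by (field; repeat split; first [assumption | lra]) end.
      rewrite EA, EB, EC, ED. reflexivity. }
    split; [exact Heq|]. intros Hlt Ha11 HK2''.
    assert (HaX : 0 < a u1 u2 * (K2 u2 * (1 - d / r2)) - r1).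
    { apply (Rmult_lt_compat_l (a u1 u2)) in Hlt; [|lra].
      replace (a u1 u2 * (r1 / a u1 u2)) with r1 in Hlt by (field; lra). lra. }
    set (X := K2 u2 * (1 - d / r2)) in *.
    assert (Q1 : exists J1 J2 J3 J4, Q4 (fun q => c1 (V q)) (0, X, u1, u2) J1 J2 J3 J4 /\ J1 < 0 /\ J2 = 0 /\ J3 = 0 /\ J4 = 0).
    { eexists _, _, _, _. split.
      { cbv beta zeta delta [V hp_field]. apply Q4_tup1. q4 K1 K2 a hK1s hK2s has. all: nz. }
      simpJ. split; [|split; [|split]].
      - match goal with |- ?J < 0 => replace J with (- (a u1 u2 * X - r1)) by (rewrite ?HD1, ?HK2', ?Ha1; field; repeat split; first [assumption | lra]) end. lra.
      - rewrite ?HD1, ?HK2', ?Ha1; field; repeat split; auto.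
      - rewrite ?HD1, ?HK2', ?Ha1; field; repeat split; auto.
      - rewrite ?HD1, ?HK2', ?Ha1; field; repeat split; auto. }
    assert (Q2 : exists J1 J2 J3 J4, Q4 (fun q => c2 (V q)) (0, X, u1, u2) J1 J2 J3 J4 /\ J2 < 0 /\ J3 = 0 /\ J4 = 0).
    { eexists _, _, _, _. split.
      { cbv beta zeta delta [V hp_field]. apply Q4_tup2. q4 K1 K2 a hK1s hK2s has. all: nz. }
      simpJ. split; [|split].
      - match goal with |- ?J < 0 => replace J with (- (r2 * X * / K2 u2)) by (unfold X; rewrite ?HD1, ?HK2', ?Ha1; field; repeat split; lra) end.
        assert (0 < r2 * X * / K2 u2) by pos. lra.
      - rewrite ?HD1, ?HK2', ?Ha1; field; repeat split; auto.
      - rewrite ?HD1, ?HK2', ?Ha1; field; repeat split; auto. }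
    assert (Q3 : exists J1 J2 J3 J4, Q4 (fun q => c3 (V q)) (0, X, u1, u2) J1 J2 J3 J4 /\ J3 < 0).
    { eexists _, _, _, _. split.
      { cbv beta zeta delta [V hp_field]. apply Q4_tup3. q4 K1 K2 a hK1s hK2s has. all: nz. }
      simpJ.
      match goal with |- ?J < 0 => replace J with (- (s1 ^ 2 * X * pd1 (pd1 a) u1 u2)) by (rewrite ?HD1, ?HK2', ?Ha1; field; repeat split; first [assumption | lra]) end.
      assert (0 < s1 ^ 2 * X * pd1 (pd1 a) u1 u2) by pos. lra. }
    assert (Q4' : exists J1 J2 J3 J4, Q4 (fun q => c4 (V q)) (0, X, u1, u2) J1 J2 J3 J4 /\ J3 = 0 /\ J4 < 0).
    { eexists _, _, _, _. split.
      { cbv beta zeta delta [V hp_field]. apply Q4_tup4. q4 K1 K2 a hK1s hK2s has. all: nz. }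
      simpJ. split.
      - rewrite ?HD1, ?HK2', ?Ha1; field; repeat split; auto.
      - match goal with |- ?J < 0 => replace J with (- (s2 ^ 2 * r2 * X * (- Derive_n K2 2 u2) * / K2 u2 ^ 2)) by (rewrite ?HD1, ?HK2', ?Ha1; field; repeat split; first [assumption | lra]) end.
        assert (0 < s2 ^ 2 * r2 * X * (- Derive_n K2 2 u2) * / K2 u2 ^ 2) by pos. lra. }
    destruct Q1 as (J11 & J12 & J13 & J14 & H1 & N11 & E12 & E13 & E14).
    destruct Q2 as (J21 & J22 & J23 & J24 & H2 & N22 & E23 & E24).
    destruct Q3 as (J31 & J32 & J33 & J34 & H3 & N33).
    destruct Q4' as (J41 & J42 & J43 & J44 & H4 & E43 & N44).
    exact (caseII V _ _ _ _ _ _ _ _ _ _ _ _ _ _ _ _ _ Heq H1 H2 H3 H4 E12 E13 E14 E23 E24 E43 N11 N22 N33 N44).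
Qed.
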